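(* Let $A$ and $B$ be commutative rings with identity and let $\phi: A\to B$ be a surjective ring homomorphism whose kernel is the principal ideal $\ker(\phi)=\langle \pi\rangle$ for some $\pi\in A$. If $I$ is an ideal of $A$ such that $\phi(I)$ is generated by $n$ elements, then there exist $a_1,a_2,\dots,a_n\in I$ such that $$I=\langle a_1,a_2,\dots,a_n\rangle+\pi(I:\pi).$$ In particular, if $B$ is Noetherian, then for every ideal $I$ of $A$ there exist a positive integer $n$ and elements $a_1,\dots,a_n\in I$ such that $I=\langle a_1,\dots,a_n\rangle+\pi(I:\pi)$.
   Context: For ideals $I,J$ of a commutative ring $R$, the ideal quotient is $(I:J)=\{x\in R: xJ\subseteq I\}$, and $(I:a)$ denotes $(I:\langle a\rangle)$. For an ideal $K$ and $\pi\in A$, $\pi K=\{\pi k: k\in K\}$. *)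

(* Defs.v *)
From mathcomp Require Import all_boot all_order all_algebra.
Set Implicit Arguments. Unset Strict Implicit. Unset Printing Implicit Defensive.
Import GRing.Theory.
Local Open Scope ring_scope.

Definition is_ideal (R : comPzRingType) (I : R -> Prop) : Prop :=
  [/\ I 0, (forall x y, I x -> I y -> I (x + y)) & (forall r x, I x -> I (r * x))].

Definition gen_ideal (R : comPzRingType) (n : nat) (a : 'I_n -> R) : R -> Prop :=
  fun x => exists c : 'I_n -> R, x = \sum_(i < n) c i * a i.

Definition ideal_add (R : comPzRingType) (J K : R -> Prop) : R -> Prop :=
  fun x => exists y z, [/\ J y, K z & x = y + z].

Definition ideal_colon (R : comPzRingType) (I : R -> Prop) (a : R) : R -> Prop :=
  fun x => I (x * a).

Definition ideal_scale (R : comPzRingType) (p : R) (K : R -> Prop) : R -> Prop :=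
  fun y => exists k, K k /\ y = p * k.

Definition img (A B : Type) (f : A -> B) (I : A -> Prop) : B -> Prop :=
  fun b => exists a, I a /\ b = f a.

Definition same_ideal (R : Type) (I J : R -> Prop) : Prop := forall x, I x <-> J x.

Definition noetherian (R : comPzRingType) : Prop :=
  forall J : R -> Prop, is_ideal J ->
    exists n (b : 'I_n -> R), same_ideal J (gen_ideal b).

(* Main.v *)
Require Import Defs.
From mathcomp Require Import all_boot all_order all_algebra.
Local Open Scope ring_scope.
Import GRing.Theory.

Definition ext0 (R : comPzRingType) n (a : 'I_n -> R) : 'I_n.+1 -> R :=
  fun i => if unlift ord0 i is Some j then a j else 0.

Arguments ext0 {R n}.

Lemma ext0_gen (R : comPzRingType) n (a : 'I_n -> R) x :
  gen_ideal a x <-> gen_ideal (ext0 a) x.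
Proof.
split=> -[c ->].
- exists (ext0 c); rewrite big_ord_recl /ext0 unlift_none mul0r add0r.
  by apply: eq_bigr => j _; rewrite liftK.
- exists (fun j => c (lift ord0 j)); rewrite big_ord_recl /ext0 unlift_none mulr0 add0r.
  by apply: eq_bigr => j _; rewrite liftK.
Qed.

Theorem proposition2p1 (A B : comPzRingType) (phi : {rmorphism A -> B}) (p : A) :
  (forall b : B, exists a : A, phi a = b) ->
  same_ideal (fun x => phi x = 0) (fun x => exists c : A, x = c * p) ->
  (forall (I : A -> Prop) (n : nat), is_ideal I ->
     (exists b : 'I_n -> B, same_ideal (img phi I) (gen_ideal b)) ->
     exists a : 'I_n -> A, (forall i, I (a i)) /\
       same_ideal I (ideal_add (gen_ideal a) (ideal_scale p (ideal_colon I p))))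
  /\
  (noetherian B ->
   forall I : A -> Prop, is_ideal I ->
     exists n : nat, (0 < n)%N /\
       exists a : 'I_n -> A, (forall i, I (a i)) /\
         same_ideal I (ideal_add (gen_ideal a) (ideal_scale p (ideal_colon I p)))).
Proof.
move=> surj hker.
have part1 : forall (I : A -> Prop) (n : nat), is_ideal I ->
     (exists b : 'I_n -> B, same_ideal (img phi I) (gen_ideal b)) ->
     exists a : 'I_n -> A, (forall i, I (a i)) /\
       same_ideal I (ideal_add (gen_ideal a) (ideal_scale p (ideal_colon I p))).
  move=> I n [I0 ID IM] [b hb].
  have hbi : forall i, img phi I (b i).
    move=> i; apply/hb; exists (fun j => if j == i then 1 else 0).
    rewrite (bigD1 i) //= eqxx mul1r big1 ?addr0 // => j /negbTE ->.
    by rewrite mul0r.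
  have /fin_all_exists [a ha] : forall i, exists a, I a /\ b i = phi a.
    by move=> i; have [a [Ia ->]] := hbi i; exists a.
  exists a; split; first by move=> i; case: (ha i).
  have Ipk : forall k, ideal_colon I p k -> I (p * k).
    by move=> k; rewrite /ideal_colon mulrC.
  have Igen : forall y, gen_ideal a y -> I y.
    move=> y [c ->]; refine (big_ind I I0 _ _).
      by move=> ? ? ? ?; apply: ID.
    by move=> i _; apply: IM; case: (ha i).
  move=> x; split.
  - move=> Ix.
    have [c hc] : gen_ideal b (phi x) by apply/hb; exists x.
    have /fin_all_exists [c' hc'] := fun i => surj (c i).
    set y := \sum_(i < n) c' i * a i.
    have : phi (x - y) = 0.
      rewrite rmorphB hc rmorph_sum /=; apply/eqP; rewrite subr_eq0; apply/eqP; apply: eq_bigr => i _.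
      by rewrite rmorphM hc'; case: (ha i) => _ ->.
    move/hker => [k hk].
    exists y, (p * k); split; first by exists c'.
      exists k; split => //; rewrite /ideal_colon -hk.
      have -> : x - y = x + (-1) * y by rewrite mulN1r.
      apply: ID => //; apply: IM; apply: Igen; by exists c'.
    by rewrite mulrC -hk addrC subrK.
  - move=> [y [z [Gy [k [Ck ->]] ->]]]; apply: ID; first exact: Igen.
    exact: Ipk.
split => // noeth I hI.
have hImg : is_ideal (img phi I).
  case: hI => I0 ID IM; split.
  - by exists 0; rewrite rmorph0.
  - by move=> _ _ [u [Iu ->]] [v [Iv ->]]; exists (u + v); split; [exact: ID | rewrite rmorphD].
  - move=> r _ [u [Iu ->]]; have [r' <-] := surj r.
    by exists (r' * u); split; [exact: IM | rewrite rmorphM].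
have [n [b hb]] := noeth _ hImg.
have [a [Ia ha]] := part1 I n hI (ex_intro _ b hb).
exists n.+1; split => //; exists (ext0 a); split.
  by move=> i; rewrite /ext0; case: unlift => [j|] //; case: hI.
move=> x; split.
  move/ha=> [y [z [Gy Kz ->]]]; exists y, z; split => //.
  exact: (proj1 (ext0_gen _ _ a y) Gy).
by move=> [y [z [Gy Kz ->]]]; apply/ha; exists y, z; split => //; exact: (proj2 (ext0_gen _ _ a y) Gy).
Qed.
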